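(* Define $\mathrm{CS}:Q\to\mathbb{R}$ by $\mathrm{CS}(q)=\int_{p(q)/q}^{1}(vq-p(q))f(v)\,dv$. Then $\mathrm{CS}$ is convex on $Q$ if and only if \[ r(v)r''(v)+r'(v)\le 1 \quad\text{for all } v\in\big(\overline p(q_h),\overline p(q_\ell)\big). \]
   Context: Let $0<q_\ell<q_h<\infty$, $Q=[q_\ell,q_h]$, and let $c$ be a real number with $0<c<q_\ell$. Let $F$ be a probability distribution on $[0,1]$ with support $[0,1]$ admitting a twice continuously differentiable density $f:(0,1)\to\mathbb{R}_{>0}$. Define $r(v)=(1-F(v))/f(v)$ and $\psi(v)=v-r(v)$ on $(0,1)$, and assume $\psi'(v)>0$ whenever $\psi(v)>0$. For $q\in Q$, $p(q)$ is the unique maximizer over $p\in\mathbb{R}$ of $(p-c)\big(1-F(p/q)\big)$, and $\overline p(q)=p(q)/q$. *)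

(* Defs.v *)
From Stdlib Require Import Reals.
From Coquelicot Require Import Coquelicot.
Open Scope R_scope.

Definition rfun (F f : R -> R) (v : R) : R := (1 - F v) / f v.

Definition psi (F f : R -> R) (v : R) : R := v - rfun F f v.

Definition profit (F : R -> R) (c q p : R) : R := (p - c) * (1 - F (p / q)).

(* CS(q) = int_{p(q)/q}^{1} (v q - p(q)) f(v) dv, as a (possibly improper at 1)
   Riemann integral *)
Definition CS (f p : R -> R) (q : R) : R :=
  RInt_gen (fun v => (v * q - p q) * f v) (at_point (p q / q)) (at_left 1).

(* Main.v *)
Require Import Defs.
From Stdlib Require Import Reals Lra Psatz.
From Coquelicot Require Import Coquelicot.
Open Scope R_scope.

Lemma loc01 (x : R) : 0 < x < 1 -> locally x (fun y => 0 < y < 1).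
Proof.
  intros Hx.
  assert (He : 0 < Rmin x (1 - x)) by (apply Rmin_pos; lra).
  exists (mkposreal _ He). intros y Hy.
  change (Rabs (y - x) < Rmin x (1 - x)) in Hy.
  pose proof (Rmin_l x (1-x)); pose proof (Rmin_r x (1-x)).
  apply Rabs_def2 in Hy. lra.
Qed.

Section S.
Variables (ql qh c : R) (F f p : R -> R).
Hypothesis (Hq : 0 < ql < qh) (Hc : 0 < c < ql).
Hypothesis  (HF0 : forall x, x <= 0 -> F x = 0)
  (HF1 : forall x, 1 <= x -> F x = 1)
  (HFc : forall x, continuous F x)
  (HFd : forall x, 0 < x < 1 -> is_derive F x (f x))
  (Hfpos : forall x, 0 < x < 1 -> 0 < f x)
  (Hf1 : forall x, 0 < x < 1 -> ex_derive f x)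
  (Hf2 : forall x, 0 < x < 1 -> ex_derive (Derive f) x).

Definition r1f y := -1 - (1 - F y) * Derive f y / (f y * f y).

Lemma rr_der y : 0 < y < 1 -> is_derive (rfun F f) y (r1f y).
Proof.
  intros Hy. pose proof (Hfpos y Hy). pose proof (HFd y Hy).
  unfold rfun, r1f. auto_derive.
  - repeat split; auto. eexists; eauto. lra.
  - change (Derive (fun x0 : R => F x0) y) with (Derive F y).
    change (Derive (fun x0 : R => f x0) y) with (Derive f y).
    rewrite (is_derive_unique _ _ _ H0). field. lra.
Qed.

Lemma rr_ex y : 0 < y < 1 -> ex_derive (rfun F f) y.
Proof. intros; eexists; apply rr_der; auto. Qed.

Lemma Drr_loc x : 0 < x < 1 -> locally x (fun y => r1f y = Derive (rfun F f) y).
Proof.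
  intros Hx. apply (filter_imp (fun y => 0 < y < 1)); [|apply loc01; auto].
  intros y Hy. symmetry; apply is_derive_unique, rr_der; auto.
Qed.

Lemma Drr_ex x : 0 < x < 1 -> ex_derive (Derive (rfun F f)) x.
Proof.
  intros Hx. apply (ex_derive_ext_loc r1f); [apply Drr_loc; auto|].
  pose proof (Hfpos x Hx). pose proof (HFd x Hx).
  unfold r1f. auto_derive. repeat split; auto; try (eexists; eauto; fail);
  try (apply Hf1; auto); try (apply Hf2; auto); nra.
Qed.

Lemma ps_der y : 0 < y < 1 -> is_derive (psi F f) y (1 - Derive (rfun F f) y).
Proof.
  intros Hy. unfold psi. apply (is_derive_minus (fun v => v) (rfun F f)).
  auto_derive; auto. apply Derive_correct, rr_ex; auto.
Qed.

Lemma Dps_eq y : 0 < y < 1 -> Derive (psi F f) y = 1 - Derive (rfun F f) y.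
Proof. intros; apply is_derive_unique, ps_der; auto. Qed.

Lemma Dps_der x : 0 < x < 1 ->
  is_derive (Derive (psi F f)) x (- Derive (Derive (rfun F f)) x).
Proof.
  intros Hx. apply (is_derive_ext_loc (fun y => 1 - Derive (rfun F f) y)).
  - apply (filter_imp (fun y => 0 < y < 1)); [|apply loc01; auto].
    intros y Hy. symmetry; apply Dps_eq; auto.
  - replace (- Derive (Derive (rfun F f)) x) with (0 - Derive (Derive (rfun F f)) x) by ring.
    apply (is_derive_minus (fun _ => 1) (Derive (rfun F f))). auto_derive; auto. apply Derive_correct, Drr_ex; auto.
Qed.


Lemma up_right (g : R -> R) x D : is_derive g x D -> 0 < D ->
  forall d, 0 < d -> exists h, 0 < h < d /\ g x < g (x + h).
Proof.
  intros Hd HD d Hdpos. apply is_derive_Reals in Hd.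
  destruct (Hd (D/2)) as [del Hdel]; [lra|].
  pose proof (cond_pos del).
  set (h := Rmin del d / 2).
  assert (0 < Rmin del d) by (apply Rmin_pos; lra).
  pose proof (Rmin_l del d). pose proof (Rmin_r del d).
  exists h. split. unfold h; lra.
  assert (Hh : Rabs ((g (x + h) - g x) / h - D) < D/2).
  { apply Hdel. unfold h; lra. rewrite Rabs_pos_eq; unfold h; lra. }
  apply Rabs_def2 in Hh. destruct Hh as [_ Hh].
  assert (0 < (g (x + h) - g x) / h) by lra.
  assert (0 < h) by (unfold h; lra).
  assert (0 < g (x+h) - g x).
  { replace (g (x + h) - g x) with (((g (x + h) - g x) / h) * h) by (field; lra).
    apply Rmult_lt_0_compat; lra. }
  lra.
Qed.

Lemma up_left (g : R -> R) x D : is_derive g x D -> D < 0 ->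
  exists h, 0 < h /\ g x < g (x - h).
Proof.
  intros Hd HD. apply is_derive_Reals in Hd.
  destruct (Hd (-D/2)) as [del Hdel]; [lra|].
  pose proof (cond_pos del).
  set (h := del / 2).
  exists h. split. unfold h; lra.
  assert (Hh : Rabs ((g (x + - h) - g x) / (- h) - D) < -D/2).
  { apply Hdel. unfold h; lra. rewrite Rabs_Ropp, Rabs_pos_eq; unfold h; lra. }
  apply Rabs_def2 in Hh. destruct Hh as [Hh _].
  assert (0 < h) by (unfold h; lra).
  assert ((g (x + - h) - g x) / (- h) < 0) by lra.
  assert (0 < g (x + - h) - g x).
  { replace (g (x + - h) - g x) with (- (((g (x + - h) - g x) / (- h)) * h)) by (field; lra).
    assert (0 < - ((g (x + - h) - g x) / - h) * h) by (apply Rmult_lt_0_compat; lra).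
    lra. }
  replace (x - h) with (x + - h) by ring. lra.
Qed.

Lemma cont_of_ex (g : R -> R) x : ex_derive g x -> continuity_pt g x.
Proof. intros H; apply continuity_pt_filterlim. exact (ex_derive_continuous g x H). Qed.

Lemma F_incr a b : 0 < a < b -> b < 1 -> F a < F b.
Proof.
  intros Hab Hb.
  destruct (MVT_cor2 F f a b) as [xi [Hxi1 Hxi2]]; [lra| |].
  - intros z Hz. apply is_derive_Reals, HFd. lra.
  - assert (0 < f xi) by (apply Hfpos; lra).
    assert (0 < f xi * (b - a)) by (apply Rmult_lt_0_compat; lra). lra.
Qed.

Lemma F_lt1 y : 0 < y < 1 -> F y < 1.
Proof.
  intros Hy. set (m := (y + 1) / 2).
  assert (F y < F m) by (apply F_incr; unfold m; lra).
  enough (F m <= 1) by lra.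
  destruct (Rle_lt_dec (F m) 1) as [?|Hm]; auto. exfalso.
  pose proof (HFc 1) as Hc1.
  apply filterlim_locally with (eps := mkposreal _ (proj2 (Rlt_0_minus _ _) Hm)) in Hc1.
  destruct Hc1 as [d Hd].
  pose proof (cond_pos d).
  set (s := 1 - Rmin d (1 - m) / 2).
  assert (0 < Rmin d (1 - m)) by (apply Rmin_pos; unfold m; lra).
  pose proof (Rmin_l d (1 - m)). pose proof (Rmin_r d (1-m)).
  assert (Hs : ball 1 d s).
  { change (Rabs (s - 1) < d). rewrite Rabs_left; unfold s; lra. }
  specialize (Hd s Hs). change (Rabs (F s - F 1) < F m - 1) in Hd.
  rewrite (HF1 1) in Hd by lra. apply Rabs_def2 in Hd.
  assert (F m < F s) by (apply F_incr; unfold s, m in *; lra).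
  lra.
Qed.

Lemma F_le1 x : F x <= 1.
Proof.
  destruct (Rle_lt_dec x 0). rewrite HF0; lra.
  destruct (Rlt_le_dec x 1). pose proof (F_lt1 x); lra.
  rewrite HF1; lra.
Qed.

Hypothesis (Hpsi : forall v, 0 < v < 1 -> psi F f v > 0 -> Derive (psi F f) v > 0).

Lemma ps_ex y : 0 < y < 1 -> ex_derive (psi F f) y.
Proof. intros; eexists; apply ps_der; auto. Qed.

Lemma psi_mono a b : 0 < a -> a < b -> b < 1 -> 0 < psi F f a -> psi F f a < psi F f b.
Proof.
  intros Ha Hab Hb Hpa.
  destruct (Rlt_le_dec (psi F f a) (psi F f b)) as [|Hba]; auto. exfalso.
  assert (Hd : forall x, 0 < x < 1 -> is_derive (psi F f) x (Derive (psi F f) x))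
    by (intros; apply Derive_correct, ps_ex; auto).
  destruct (up_right _ a _ (Hd a ltac:(lra)) (Hpsi a ltac:(lra) Hpa) (b - a)) as [h [Hh1 Hh2]]; [lra|].
  destruct (continuity_ab_maj (psi F f) a b) as [m [Hm1 Hm2]]; [lra| |].
  { intros; apply cont_of_ex, ps_ex; lra. }
  assert (psi F f (a + h) <= psi F f m) by (apply Hm1; lra).
  assert (a <> m) by (intro; subst; lra).
  assert (b <> m) by (intro; subst; lra).
  assert (0 < psi F f m) by lra.
  destruct (up_right _ m _ (Hd m ltac:(lra)) (Hpsi m ltac:(lra) ltac:(lra)) (b - m)) as [h' [Hh1' Hh2']]; [lra|].
  assert (psi F f (m + h') <= psi F f m) by (apply Hm1; lra).
  lra.
Qed.

Lemma psi_le x y : 0 < x < 1 -> 0 < y < 1 -> 0 < psi F f x -> psi F f x <= psi F f y -> x <= y.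
Proof.
  intros Hx Hy Hp Hle. destruct (Rle_lt_dec x y) as [|Hyx]; auto.
  assert (psi F f y < psi F f x) by (apply psi_mono; lra). lra.
Qed.

Lemma psi_inj x y : 0 < x < 1 -> 0 < y < 1 -> 0 < psi F f x -> psi F f x = psi F f y -> x = y.
Proof.
  intros. apply Rle_antisym; apply psi_le; auto; lra.
Qed.


Hypothesis (Hpmax : forall q, ql <= q <= qh ->
     forall x, profit F c q x <= profit F c q (p q)).

Lemma u_range q : ql <= q <= qh -> 0 < p q / q < 1.
Proof.
  intros Hqq. assert (Hq0 : 0 < q) by lra.
  set (x0 := (c + q) / 2).
  assert (Hx0 : 0 < x0 / q < 1).
  { unfold x0; split. apply Rdiv_lt_0_compat; lra.
    apply Rmult_lt_reg_r with q; auto. field_simplify; lra. }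
  assert (0 < profit F c q x0).
  { unfold profit. apply Rmult_lt_0_compat. unfold x0; lra.
    pose proof (F_lt1 _ Hx0); lra. }
  pose proof (Hpmax q Hqq x0).
  assert (c < p q).
  { destruct (Rlt_le_dec c (p q)) as [|Hle]; auto.
    unfold profit in *. pose proof (F_le1 (p q / q)).
    assert ((p q - c) * (1 - F (p q / q)) <= 0).
    { apply Rmult_le_0_r; lra. }
    lra. }
  assert (p q < q).
  { destruct (Rlt_le_dec (p q) q) as [|Hle]; auto.
    exfalso. unfold profit in *.
    assert (1 <= p q / q).
    { apply Rmult_le_reg_r with q; auto. field_simplify; lra. }
    rewrite (HF1 (p q / q)) in H0 by auto. lra. }
  split. apply Rdiv_lt_0_compat; lra.
  apply Rmult_lt_reg_r with q; auto. field_simplify; lra.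
Qed.

Lemma u_foc q : ql <= q <= qh -> psi F f (p q / q) = c / q.
Proof.
  intros Hqq. assert (Hq0 : 0 < q) by lra.
  pose proof (u_range q Hqq) as Hu.
  set (u := p q / q) in *.
  set (D := (1 - F u) - (p q - c) * f u / q).
  assert (HD : is_derive (profit F c q) (p q) D).
  { unfold profit. pose proof (HFd u Hu) as HFu.
    auto_derive.
    - exists (f u). exact HFu.
    - replace (Derive (fun x0 : R => F x0) (p q * / q)) with (f u)
        by (symmetry; apply is_derive_unique; exact HFu).
      unfold D, u, Rdiv. ring. }
  assert (D = 0).
  { destruct (Rtotal_order D 0) as [Hl|[He|Hg]]; auto; exfalso.
    - destruct (up_left _ _ _ HD Hl) as [h [_ Hh]].
      pose proof (Hpmax q Hqq (p q - h)); lra.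
    - destruct (up_right _ _ _ HD Hg 1) as [h [_ Hh]]; [lra|].
      pose proof (Hpmax q Hqq (p q + h)); lra. }
  pose proof (Hfpos u Hu).
  unfold psi, rfun. unfold D in H.
  assert (Hpq : p q = u * q) by (unfold u; field; lra).
  rewrite Hpq in H.
  assert (1 - F u = (u * q - c) * f u / q) by lra.
  rewrite H1. field. split; lra.
Qed.


Definition g0 v := 1 - F v.
Definition Gf v := - RInt g0 1 v.

Lemma g0_cont v : continuous g0 v.
Proof.
  unfold g0. apply (continuous_minus (fun _ => 1) F). apply continuous_const. apply HFc.
Qed.

Lemma G_der v : is_derive Gf v (- (1 - F v)).
Proof.
  unfold Gf. apply (is_derive_opp (RInt g0 1) v (g0 v)).
  apply (is_derive_RInt g0 (RInt g0 1) 1 v); [|apply g0_cont].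
  apply filter_forall. intros b. apply (RInt_correct g0 1 b). apply (ex_RInt_continuous g0).
  intros; apply g0_cont.
Qed.

Lemma G1 : Gf 1 = 0.
Proof. unfold Gf. rewrite (RInt_point 1 g0). change (- 0 = 0). ring. Qed.

Lemma cont_f x : 0 < x < 1 -> continuous f x.
Proof. intros; exact (ex_derive_continuous f x (Hf1 x H)). Qed.

Lemma CS_eq q : ql <= q <= qh -> CS f p q = q * Gf (p q / q).
Proof.
  intros Hqq. assert (Hq0 : 0 < q) by lra.
  pose proof (u_range q Hqq) as Hu.
  set (u := p q / q) in *.
  assert (Hpq : p q = u * q) by (unfold u; field; lra).
  set (A := fun v => q * ((v - u) * (F v - 1) - Gf v)).
  assert (HA1 : A 1 = 0) by (unfold A; rewrite HF1, G1; lra).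
  assert (HAu : A u = - (q * Gf u)) by (unfold A; ring).
  assert (HAc : continuous A 1).
  { unfold A. apply (continuous_mult (fun _ => q) (fun v => (v - u) * (F v - 1) - Gf v)).
    apply continuous_const.
    apply (continuous_minus (fun v => (v - u) * (F v - 1)) Gf).
    apply (continuous_mult (fun v => v - u) (fun v => F v - 1)).
    apply (continuous_minus (fun v => v) (fun _ => u)). apply continuous_id. apply continuous_const.
    apply (continuous_minus F (fun _ => 1)). apply HFc. apply continuous_const.
    apply ex_derive_continuous. eexists; apply G_der. }
  unfold CS. apply is_RInt_gen_unique.
  unfold is_RInt_gen, filterlimi, filter_le, filtermapi.
  intros P [eps HP].
  apply filterlim_locally with (eps := eps) in HAc. destruct HAc as [d Hd].
  pose proof (cond_pos d).
  apply Filter_prod with (fun a => a = u) (fun b => u < b < 1 /\ ball 1 d b).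
  - reflexivity.
  - assert (Hm : 0 < Rmin d (1 - u)) by (apply Rmin_pos; lra).
    exists (mkposreal _ Hm). intros y Hy Hy1. simpl in Hy.
    change (Rabs (y - 1) < Rmin d (1 - u)) in Hy.
    pose proof (Rmin_l d (1 - u)). pose proof (Rmin_r d (1 - u)).
    apply Rabs_def2 in Hy. split. lra. change (Rabs (y - 1) < d). apply Rabs_def1; lra.
  - intros a b -> [Hb Hball]. exists (A b - A u). split.
    + apply (is_RInt_derive A (fun v => (v * q - p q) * f v) u b).
      * intros x Hx. rewrite Rmin_left in Hx by lra. rewrite Rmax_right in Hx by lra.
        assert (Hx01 : 0 < x < 1) by lra.
        pose proof (HFd x Hx01) as HFx.
        unfold A. auto_derive.
        -- split; [exists (f x); exact HFx|]. split; [exists (- (1 - F x)); apply G_der|]. auto.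
        -- replace (Derive (fun x0 : R => F x0) x) with (f x)
             by (symmetry; apply is_derive_unique; exact HFx).
           replace (Derive (fun x0 : R => Gf x0) x) with (- (1 - F x))
             by (symmetry; apply is_derive_unique; apply G_der).
           rewrite Hpq. ring.
      * intros x Hx. rewrite Rmin_left in Hx by lra. rewrite Rmax_right in Hx by lra.
        apply (continuous_mult (fun v => v * q - p q) f).
        apply (continuous_minus (fun v => v * q) (fun _ => p q)).
        apply (continuous_mult (fun v => v) (fun _ => q)). apply continuous_id. apply continuous_const.
        apply continuous_const. apply cont_f. lra.
    + apply HP. specialize (Hd b Hball). change (Rabs (A b - A 1) < eps) in Hd.
      change (Rabs (A b - A u - q * Gf u) < eps). rewrite HAu.
      rewrite HA1 in Hd. replace (A b - - (q * Gf u) - q * Gf u) with (A b - 0) by ring. exact Hd.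
Qed.


Definition ua := p qh / qh.
Definition ub := p ql / ql.
Definition Phi w := c / psi F f w.
Definition Kf w := Phi w * Gf w.
Definition Hf w := Gf w + psi F f w * (1 - F w) / Derive (psi F f) w.

Lemma Qh : ql <= qh <= qh. Proof. lra. Qed.
Lemma Ql : ql <= ql <= qh. Proof. lra. Qed.

Lemma ab_props : 0 < ua /\ ua < ub /\ ub < 1 /\ psi F f ua = c / qh /\ psi F f ub = c / ql.
Proof.
  pose proof (u_range _ Qh) as Ha. pose proof (u_range _ Ql) as Hb.
  pose proof (u_foc _ Qh) as Hpa. pose proof (u_foc _ Ql) as Hpb.
  fold ua in Ha, Hpa. fold ub in Hb, Hpb.
  assert (c / qh < c / ql).
  { apply Rmult_lt_compat_l. lra. apply Rinv_lt_contravar; nra. }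
  assert (0 < c / qh) by (apply Rdiv_lt_0_compat; lra).
  assert (ua <= ub) by (apply psi_le; auto; lra).
  assert (ua <> ub) by (intro E; rewrite E in Hpa; lra).
  repeat split; auto; lra.
Qed.

Lemma w_props w : ua <= w <= ub -> 0 < w < 1 /\ c / qh <= psi F f w <= c / ql /\ 0 < psi F f w.
Proof.
  intros Hw. destruct ab_props as (H1 & H2 & H3 & H4 & H5).
  assert (0 < c / qh) by (apply Rdiv_lt_0_compat; lra).
  assert (c / qh <= psi F f w).
  { destruct (Req_dec ua w) as [<-|]. lra. left. rewrite <- H4. apply psi_mono; lra. }
  assert (psi F f w <= c / ql).
  { destruct (Req_dec w ub) as [->|]. lra. left. rewrite <- H5. apply psi_mono; lra. }
  repeat split; lra.
Qed.

Lemma Phi_range w : ua <= w <= ub -> ql <= Phi w <= qh.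
Proof.
  intros Hw. destruct (w_props w Hw) as (H1 & [H2 H3] & H4). unfold Phi.
  assert (E : c / psi F f w * psi F f w = c) by (field; lra).
  assert (E1 : c / ql * ql = c) by (field; lra).
  assert (E2 : c / qh * qh = c) by (field; lra).
  split.
  - apply Rmult_le_reg_r with (psi F f w); auto. rewrite E. nra.
  - apply Rmult_le_reg_r with (psi F f w); auto. rewrite E. nra.
Qed.

Lemma u_Phi w : ua <= w <= ub -> p (Phi w) / Phi w = w.
Proof.
  intros Hw. pose proof (Phi_range w Hw) as HP. destruct (w_props w Hw) as (H1 & H2 & H3).
  pose proof (u_range _ HP). pose proof (u_foc _ HP).
  apply psi_inj; auto. rewrite H0. apply Rdiv_lt_0_compat; lra.
  rewrite H0. unfold Phi. field. lra.
Qed.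

Lemma CS_K w : ua <= w <= ub -> CS f p (Phi w) = Kf w.
Proof.
  intros Hw. rewrite CS_eq by (apply Phi_range; auto). rewrite u_Phi; auto.
Qed.

Lemma u_in q : ql <= q <= qh -> ua <= p q / q <= ub /\ Phi (p q / q) = q.
Proof.
  intros Hqq. destruct ab_props as (H1 & H2 & H3 & H4 & H5).
  pose proof (u_range _ Hqq). pose proof (u_foc _ Hqq).
  assert (0 < c / qh) by (apply Rdiv_lt_0_compat; lra).
  assert (c / qh <= c / q).
  { apply Rmult_le_compat_l. lra. apply Rinv_le_contravar; lra. }
  assert (c / q <= c / ql).
  { apply Rmult_le_compat_l. lra. apply Rinv_le_contravar; lra. }
  split; [split|].
  - apply psi_le; auto; lra.
  - apply psi_le; auto; lra.
  - unfold Phi. rewrite H0. field. lra.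
Qed.

Lemma u_decr x y : ql <= x -> x < y -> y <= qh -> p y / y < p x / x.
Proof.
  intros. assert (Hx : ql <= x <= qh) by lra. assert (Hy : ql <= y <= qh) by lra.
  pose proof (u_range _ Hx). pose proof (u_range _ Hy).
  pose proof (u_foc _ Hx). pose proof (u_foc _ Hy).
  assert (c / y < c / x).
  { apply Rmult_lt_compat_l. lra. apply Rinv_lt_contravar; nra. }
  assert (0 < c / y) by (apply Rdiv_lt_0_compat; lra).
  assert (Hle : p y / y <= p x / x) by (apply psi_le; auto; lra).
  destruct Hle as [|E]; auto. exfalso.
  match goal with HH : psi F f (p y / y) = c / y |- _ => rewrite E in HH end. lra.
Qed.

Lemma Phi_decr w1 w2 : ua <= w1 -> w1 < w2 -> w2 <= ub -> Phi w2 < Phi w1.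
Proof.
  intros. destruct (w_props w1 ltac:(lra)) as (A1 & A2 & A3).
  destruct (w_props w2 ltac:(lra)) as (B1 & B2 & B3).
  assert (psi F f w1 < psi F f w2) by (apply psi_mono; lra).
  unfold Phi. apply Rmult_lt_compat_l. lra. apply Rinv_lt_contravar; nra.
Qed.

Lemma Phi_der w : 0 < w < 1 -> 0 < psi F f w ->
  is_derive Phi w (- c * Derive (psi F f) w / (psi F f w)^2).
Proof.
  intros Hw Hp. unfold Phi. pose proof (ps_ex w Hw).
  auto_derive. split; auto. lra.
  change (Derive (fun x => psi F f x) w) with (Derive (psi F f) w). field. lra.
Qed.

Lemma K_der w : 0 < w < 1 -> 0 < psi F f w ->
  is_derive Kf w ((- c * Derive (psi F f) w / (psi F f w)^2) * Gf w + Phi w * (- (1 - F w))).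
Proof.
  intros Hw Hp. unfold Kf. apply (is_derive_mult Phi Gf). apply Phi_der; auto. apply G_der.
  intros; apply Rmult_comm.
Qed.


Definition dPhi w := - c * Derive (psi F f) w / (psi F f w)^2.
Definition dK w := dPhi w * Gf w + Phi w * (- (1 - F w)).

Lemma dK_H w : 0 < w < 1 -> 0 < psi F f w -> dK w = dPhi w * Hf w.
Proof.
  intros Hw Hp. pose proof (Hpsi w Hw Hp).
  unfold dK, dPhi, Hf, Phi. field. lra.
Qed.

Lemma cauchy w1 w2 : ua <= w1 -> w1 < w2 -> w2 <= ub ->
  exists xi, w1 < xi < w2 /\ (Kf w2 - Kf w1) / (Phi w2 - Phi w1) = Hf xi.
Proof.
  intros H1 H12 H2.
  set (A := Phi w2 - Phi w1). set (B := Kf w2 - Kf w1).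
  assert (HA : A < 0) by (pose proof (Phi_decr w1 w2 H1 H12 H2); unfold A; lra).
  destruct (MVT_cor2 (fun u => A * Kf u - B * Phi u) (fun u => A * dK u - B * dPhi u) w1 w2)
    as [xi [Hxi1 Hxi2]]; auto.
  - intros z Hz. destruct (w_props z ltac:(lra)) as (Z1 & Z2 & Z3).
    apply is_derive_Reals.
    pose proof (K_der z Z1 Z3) as HK. pose proof (Phi_der z Z1 Z3) as HP.
    auto_derive.
    + split; [eexists; exact HK|]. split; [eexists; exact HP|]. auto.
      replace (Derive (fun x : R => Kf x) z) with (dK z)
        by (symmetry; apply is_derive_unique; exact HK).
      replace (Derive (fun x : R => Phi x) z) with (dPhi z)
        by (symmetry; apply is_derive_unique; exact HP).
      unfold dK, dPhi. ring.
  - exists xi. split; auto.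
    destruct (w_props xi ltac:(lra)) as (X1 & X2 & X3).
    pose proof (Hpsi xi X1 X3) as HP1.
    assert (E : A * dK xi - B * dPhi xi = 0).
    { assert (Hz : (A * dK xi - B * dPhi xi) * (w2 - w1) = 0).
      { rewrite <- Hxi1. unfold A, B. ring. }
      apply Rmult_integral in Hz. destruct Hz; auto. lra. }
    rewrite dK_H in E by auto.
    assert (HdP : dPhi xi <> 0).
    { unfold dPhi. apply Rmult_integral_contrapositive; split.
      apply Rmult_integral_contrapositive; split; lra.
      apply Rinv_neq_0_compat. apply pow_nonzero. lra. }
    fold A B.
    assert (E2 : dPhi xi * (A * Hf xi - B) = 0) by (rewrite <- E; ring).
    apply Rmult_integral in E2. destruct E2 as [E2|E2]; [contradiction|].
    replace B with (A * Hf xi) by lra. field. lra.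
Qed.


Definition Hd w := - (psi F f w * f w / (Derive (psi F f) w)^2) *
   (1 - Derive (rfun F f) w - rfun F f w * Derive (Derive (rfun F f)) w).

Lemma H_der w : 0 < w < 1 -> 0 < psi F f w -> is_derive Hf w (Hd w).
Proof.
  intros Hw Hp. pose proof (Hpsi w Hw Hp) as HP1.
  pose proof (HFd w Hw) as HFw. pose proof (G_der w) as HG.
  pose proof (Dps_der w Hw) as HD2. pose proof (ps_der w Hw) as HD1.
  pose proof (Hfpos w Hw).
  unfold Hf. auto_derive.
  - split; [eexists; exact HG|]. split; [eexists; exact HD1|].
    split; [eexists; exact HFw|]. split; [eexists; exact HD2|]. split; auto. lra.
  - replace (Derive (fun x : R => Gf x) w) with (- (1 - F w))
      by (symmetry; apply is_derive_unique; exact HG).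
    replace (Derive (fun x : R => F x) w) with (f w)
      by (symmetry; apply is_derive_unique; exact HFw).
    replace (Derive (fun x : R => Derive (psi F f) x) w) with (- Derive (Derive (rfun F f)) w)
      by (symmetry; apply is_derive_unique; exact HD2).
    change (Derive (fun x : R => psi F f x) w) with (Derive (psi F f) w).
    unfold Hd. rewrite (Dps_eq w Hw) in *. unfold rfun in *. field. split; lra.
Qed.


Lemma cont_eps (g : R -> R) x : continuity_pt g x ->
  forall eps, 0 < eps -> exists d, 0 < d /\ forall y, Rabs (y - x) < d -> Rabs (g y - g x) < eps.
Proof.
  intros Hcp eps He. destruct (Hcp eps He) as [alp [Ha Hb]].
  exists alp. split; auto. intros y Hy.
  destruct (Req_dec y x) as [->|Hne].
  - replace (g x - g x) with 0 by ring. rewrite Rabs_R0. auto.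
  - apply (Hb y). split. split; auto. exact I. auto.
Qed.

Lemma Hd_sign w : ua < w < ub ->
  (Hd w <= 0 <-> rfun F f w * Derive (Derive (rfun F f)) w + Derive (rfun F f) w <= 1).
Proof.
  intros Hw. destruct (w_props w ltac:(lra)) as (W1 & W2 & W3).
  pose proof (Hpsi w W1 W3). pose proof (Hfpos w W1).
  assert (Hk : 0 < psi F f w * f w / (Derive (psi F f) w)^2).
  { apply Rdiv_lt_0_compat. nra. apply pow_lt; lra. }
  unfold Hd. set (k := psi F f w * f w / (Derive (psi F f) w)^2) in *.
  set (X := 1 - Derive (rfun F f) w - rfun F f w * Derive (Derive (rfun F f)) w).
  split; intros HH.
  - assert (0 <= X) by nra. unfold X in *. lra.
  - assert (0 <= X) by (unfold X; lra). nra.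
Qed.

Lemma slope_eq q1 q2 : ql <= q1 -> q1 < q2 -> q2 <= qh ->
  exists xi, (p q2 / q2 < xi < p q1 / q1) /\ ((CS f p q2 - CS f p q1) / (q2 - q1) = Hf xi).
Proof.
  intros H1 H12 H2.
  assert (Hq1 : ql <= q1 <= qh) by lra. assert (Hq2 : ql <= q2 <= qh) by lra.
  destruct (u_in q1 Hq1) as [U1 P1]. destruct (u_in q2 Hq2) as [U2 P2].
  pose proof (u_decr q1 q2 H1 H12 H2) as Hd12.
  destruct (cauchy (p q2 / q2) (p q1 / q1)) as [xi [Hxi E]]; try lra.
  exists xi. split; auto. rewrite <- E.
  assert (C1 : CS f p q1 = Kf (p q1 / q1)) by (rewrite <- CS_K by auto; rewrite P1; reflexivity).
  assert (C2 : CS f p q2 = Kf (p q2 / q2)) by (rewrite <- CS_K by auto; rewrite P2; reflexivity).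
  rewrite C1, C2, P1, P2. field. lra.
Qed.

Lemma slope3 (Hconv : forall x y t, ql <= x <= qh -> ql <= y <= qh -> 0 <= t <= 1 ->
     CS f p (t * x + (1 - t) * y) <= t * CS f p x + (1 - t) * CS f p y)
  x y z : ql <= x -> x < y -> y < z -> z <= qh ->
  (CS f p y - CS f p x) / (y - x) <= (CS f p z - CS f p y) / (z - y).
Proof.
  intros H1 H2 H3 H4.
  set (t := (z - y) / (z - x)).
  assert (Ht : 0 <= t <= 1).
  { unfold t. split. apply Rmult_le_pos; [lra|]. left; apply Rinv_0_lt_compat; lra.
    apply Rmult_le_reg_r with (z - x). lra. field_simplify; lra. }
  pose proof (Hconv x z t ltac:(lra) ltac:(lra) Ht) as Hcv.
  replace (t * x + (1 - t) * z) with y in Hcv by (unfold t; field; lra).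
  assert (Hm : (z - x) * CS f p y <= (z - y) * CS f p x + (y - x) * CS f p z).
  { apply Rmult_le_compat_l with (r := z - x) in Hcv; [|lra].
    replace ((z - x) * (t * CS f p x + (1 - t) * CS f p z)) with
      ((z - y) * CS f p x + (y - x) * CS f p z) in Hcv by (unfold t; field; lra).
    exact Hcv. }
  apply Rmult_le_reg_r with ((y - x) * (z - y)). nra.
  replace ((CS f p y - CS f p x) / (y - x) * ((y - x) * (z - y))) with
    ((CS f p y - CS f p x) * (z - y)) by (field; lra).
  replace ((CS f p z - CS f p y) / (z - y) * ((y - x) * (z - y))) with
    ((CS f p z - CS f p y) * (y - x)) by (field; lra).
  nra.
Qed.

Lemma conv_core (Hs : forall x y z, ql <= x -> x < y -> y < z -> z <= qh ->
  (CS f p y - CS f p x) / (y - x) <= (CS f p z - CS f p y) / (z - y))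
  x y t : ql <= x -> x < y -> y <= qh -> 0 < t < 1 ->
  CS f p (t * x + (1 - t) * y) <= t * CS f p x + (1 - t) * CS f p y.
Proof.
  intros H1 H2 H3 Ht.
  set (z := t * x + (1 - t) * y).
  assert (x < z) by (unfold z; nra). assert (z < y) by (unfold z; nra).
  pose proof (Hs x z y H1 H H0 H3) as HH.
  apply Rmult_le_compat_r with (r := (z - x) * (y - z)) in HH; [|nra].
  replace ((CS f p z - CS f p x) / (z - x) * ((z - x) * (y - z))) with
    ((CS f p z - CS f p x) * (y - z)) in HH by (field; lra).
  replace ((CS f p y - CS f p z) / (y - z) * ((z - x) * (y - z))) with
    ((CS f p y - CS f p z) * (z - x)) in HH by (field; lra).
  replace (y - z) with (t * (y - x)) in HH by (unfold z; ring).
  replace (z - x) with ((1 - t) * (y - x)) in HH by (unfold z; ring).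
  assert (HH2 : (CS f p z - CS f p x) * t <= (CS f p y - CS f p z) * (1 - t)).
  { apply Rmult_le_reg_r with (y - x). lra. nra. }
  nra.
Qed.

Lemma conv_of_slope (Hs : forall x y z, ql <= x -> x < y -> y < z -> z <= qh ->
  (CS f p y - CS f p x) / (y - x) <= (CS f p z - CS f p y) / (z - y)) :
  forall x y t, ql <= x <= qh -> ql <= y <= qh -> 0 <= t <= 1 ->
     CS f p (t * x + (1 - t) * y) <= t * CS f p x + (1 - t) * CS f p y.
Proof.
  intros x y t Hx Hy Ht.
  destruct (Req_dec t 0) as [->|Ht0].
  { replace (0 * x + (1 - 0) * y) with y by ring. lra. }
  destruct (Req_dec t 1) as [->|Ht1].
  { replace (1 * x + (1 - 1) * y) with x by ring. lra. }
  destruct (Rtotal_order x y) as [Hxy|[<-|Hxy]].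
  - apply conv_core; auto; lra.
  - replace (t * x + (1 - t) * x) with x by ring. lra.
  - pose proof (conv_core Hs y x (1 - t) ltac:(lra) Hxy ltac:(lra) ltac:(lra)) as HH.
    replace ((1 - t) * y + (1 - (1 - t)) * x) with (t * x + (1 - t) * y) in HH by ring.
    lra.
Qed.

Lemma dir_back (Hcond : forall v, p qh / qh < v < p ql / ql ->
     rfun F f v * Derive (Derive (rfun F f)) v + Derive (rfun F f) v <= 1) :
  forall x y t, ql <= x <= qh -> ql <= y <= qh -> 0 <= t <= 1 ->
     CS f p (t * x + (1 - t) * y) <= t * CS f p x + (1 - t) * CS f p y.
Proof.
  apply conv_of_slope.
  assert (Hnon : forall w1 w2, ua < w1 -> w1 < w2 -> w2 < ub -> Hf w2 <= Hf w1).
  { intros w1 w2 H1 H2 H3.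
    destruct (MVT_cor2 Hf Hd w1 w2) as [xi [E Hxi]]; auto.
    - intros z Hz. destruct (w_props z ltac:(lra)) as (Z1 & Z2 & Z3).
      apply is_derive_Reals, H_der; auto.
    - assert (Hd xi <= 0) by (apply Hd_sign; [lra|]; apply Hcond; unfold ua, ub in *; lra).
      assert (Hd xi * (w2 - w1) <= 0) by nra. lra. }
  intros x y z H1 H2 H3 H4.
  destruct (slope_eq x y) as [xi1 [Hx1 E1]]; try lra.
  destruct (slope_eq y z) as [xi2 [Hx2 E2]]; try lra.
  assert (Hqy : ql <= y <= qh) by lra.
  destruct (u_in x ltac:(lra)) as [Ux _]. destruct (u_in z ltac:(lra)) as [Uz _].
  rewrite E1, E2. apply Hnon; lra.
Qed.

Lemma dir_fwd (Hconv : forall x y t, ql <= x <= qh -> ql <= y <= qh -> 0 <= t <= 1 ->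
     CS f p (t * x + (1 - t) * y) <= t * CS f p x + (1 - t) * CS f p y) :
  forall v, p qh / qh < v < p ql / ql ->
     rfun F f v * Derive (Derive (rfun F f)) v + Derive (rfun F f) v <= 1.
Proof.
  intros v Hv. fold ua ub in Hv.
  destruct (Rle_lt_dec (rfun F f v * Derive (Derive (rfun F f)) v + Derive (rfun F f) v) 1)
    as [|Hgt]; auto. exfalso.
  assert (Hdv : 0 < Hd v).
  { destruct (Rle_lt_dec (Hd v) 0) as [Hle|]; auto. apply Hd_sign in Hle; auto. lra. }
  destruct (w_props v ltac:(lra)) as (V1 & V2 & V3).
  destruct (up_right Hf v (Hd v) (H_der v V1 V3) Hdv (ub - v)) as [h [Hh Hvh]]; [lra|].
  set (w2 := v + h) in *.
  destruct (w_props w2 ltac:(unfold w2; lra)) as (W1 & W2 & W3).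
  set (eps := (Hf w2 - Hf v) / 2).
  assert (Heps : 0 < eps) by (unfold eps; lra).
  destruct (cont_eps Hf v (derivable_continuous_pt _ _ (exist _ _ (proj1 (is_derive_Reals _ _ _) (H_der v V1 V3)))) eps Heps)
    as [d1 [Hd1 C1]].
  destruct (cont_eps Hf w2 (derivable_continuous_pt _ _ (exist _ _ (proj1 (is_derive_Reals _ _ _) (H_der w2 W1 W3)))) eps Heps)
    as [d2 [Hd2 C2]].
  set (d := Rmin (Rmin d1 d2) h / 3).
  assert (0 < Rmin (Rmin d1 d2) h) by (repeat apply Rmin_pos; lra).
  pose proof (Rmin_l (Rmin d1 d2) h). pose proof (Rmin_r (Rmin d1 d2) h).
  pose proof (Rmin_l d1 d2). pose proof (Rmin_r d1 d2).
  assert (Hd0 : 0 < d) by (unfold d; lra).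
  set (s1 := v + d). set (s2 := w2 - d).
  assert (s1 < s2) by (unfold s1, s2, w2, d; lra).
  assert (Hs1 : v < s1 /\ s1 <= ub) by (unfold s1, d; lra).
  assert (Hs2 : s2 < w2 /\ ua <= s2) by (unfold s2, d, w2 in *; lra).
  destruct (cauchy v s1) as [xi1 [Hx1 E1]]; [lra|lra|lra|].
  destruct (cauchy s2 w2) as [xi2 [Hx2 E2]]; [lra|lra|unfold w2; lra|].
  assert (Hf xi1 < Hf v + eps).
  { assert (Rabs (xi1 - v) < d1) by (rewrite Rabs_pos_eq; unfold s1, d in *; lra).
    specialize (C1 _ H5). apply Rabs_def2 in C1. lra. }
  assert (Hf w2 - eps < Hf xi2).
  { assert (Rabs (xi2 - w2) < d2) by (rewrite Rabs_left; unfold s2, d in *; lra).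
    specialize (C2 _ H6). apply Rabs_def2 in C2. lra. }
  assert (R1 : ql <= Phi w2 <= qh) by (apply Phi_range; unfold w2; lra).
  assert (R4 : ql <= Phi v <= qh) by (apply Phi_range; unfold w2 in *; lra).
  assert (P12 : Phi w2 < Phi s2) by (apply Phi_decr; unfold w2 in *; lra).
  assert (P23 : Phi s2 < Phi s1) by (apply Phi_decr; unfold w2 in *; lra).
  assert (P34 : Phi s1 < Phi v) by (apply Phi_decr; unfold w2 in *; lra).
  pose proof (slope3 Hconv (Phi w2) (Phi s2) (Phi s1) ltac:(lra) P12 P23 ltac:(lra)) as S1.
  pose proof (slope3 Hconv (Phi s2) (Phi s1) (Phi v) ltac:(lra) P23 P34 ltac:(lra)) as S2.
  rewrite !CS_K in S1, S2 by (unfold w2 in *; lra).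
  assert (E2' : (Kf s2 - Kf w2) / (Phi s2 - Phi w2) = Hf xi2).
  { rewrite <- E2. field. split; lra. }
  assert (E1' : (Kf v - Kf s1) / (Phi v - Phi s1) = Hf xi1).
  { rewrite <- E1. field. split; lra. }
  rewrite E2' in S1. rewrite E1' in S2.
  unfold eps in *. lra.
Qed.

Lemma main_sec : (forall x y t, ql <= x <= qh -> ql <= y <= qh -> 0 <= t <= 1 ->
     CS f p (t * x + (1 - t) * y) <= t * CS f p x + (1 - t) * CS f p y)
  <->
  (forall v, p qh / qh < v < p ql / ql ->
     rfun F f v * Derive (Derive (rfun F f)) v + Derive (rfun F f) v <= 1).
Proof. split. apply dir_fwd. apply dir_back. Qed.

End S.

Theorem lemma3 (ql qh c : R) (F f p : R -> R)
  (Hq : 0 < ql < qh) (Hc : 0 < c < ql)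
  (HF0 : forall x, x <= 0 -> F x = 0)
  (HF1 : forall x, 1 <= x -> F x = 1)
  (HFc : forall x, continuous F x)
  (HFd : forall x, 0 < x < 1 -> is_derive F x (f x))
  (Hfpos : forall x, 0 < x < 1 -> 0 < f x)
  (Hf1 : forall x, 0 < x < 1 -> ex_derive f x)
  (Hf2 : forall x, 0 < x < 1 -> ex_derive (Derive f) x)
  (Hf2c : forall x, 0 < x < 1 -> continuous (Derive (Derive f)) x)
  (Hpsi : forall v, 0 < v < 1 -> psi F f v > 0 -> Derive (psi F f) v > 0)
  (Hpmax : forall q, ql <= q <= qh ->
     forall x, profit F c q x <= profit F c q (p q))
  (Hpuniq : forall q, ql <= q <= qh ->
     forall x, profit F c q x = profit F c q (p q) -> x = p q) :
  (forall x y t, ql <= x <= qh -> ql <= y <= qh -> 0 <= t <= 1 ->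
     CS f p (t * x + (1 - t) * y) <= t * CS f p x + (1 - t) * CS f p y)
  <->
  (forall v, p qh / qh < v < p ql / ql ->
     rfun F f v * Derive (Derive (rfun F f)) v + Derive (rfun F f) v <= 1).
Proof.
  apply (main_sec ql qh c F f p); auto.
Qed.
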